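(* Let $\mathcal{S}$ be a set of sum indecomposable permutations that is downward closed among indecomposables (if $\sigma\in\mathcal{S}$, $\tau$ is a subpermutation of $\sigma$ and $\tau$ is indecomposable, then $\tau\in\mathcal{S}$), and suppose there is a constant $c$ with $1\leq|\mathcal{S}_n|\leq c$ for all $n\geq1$. Then the growth rate $\lim_{n\to\infty}|(\bigoplus\mathcal{S})_n|^{1/n}$ of the sum closure $\bigoplus\mathcal{S}$ exists and equals the unique real $\gamma>1$ satisfying $$\sum_{n=1}^\infty|\mathcal{S}_n|\,\gamma^{-n}=1.$$
   Context: A permutation of length $n$ is a sequence containing each element of $\{1,\dots,n\}$ exactly once; $\tau$ is a subpermutation of $\sigma$ if some subsequence of $\sigma$ has the same relative order as $\tau$. For a set of permutations $\mathcal{S}$, $\mathcal{S}_n$ is the set of its members of length $n$. The direct sum of $\sigma$ (length $k$) and $\tau$ (length $\ell$) is the permutation $\sigma\oplus\tau$ of length $k+\ell$ with $(\sigma\oplus\tau)(i)=\sigma(i)$ for $i\leq k$ and $(\sigma\oplus\tau)(i)=k+\tau(i-k)$ for $k<i\leq k+\ell$. A permutation is (sum) indecomposable if it is not the direct sum of two shorter permutations. The sum closure $\bigoplus\mathcal{S}$ is the set of all permutations $\sigma_1\oplus\cdots\oplus\sigma_r$ ($r\geq1$) with each $\sigma_i\in\mathcal{S}$. *)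

(* Defs.v *)
From HB Require Import structures.
From mathcomp Require Import all_boot all_order all_algebra all_fingroup.
From mathcomp Require Import all_classical all_reals all_analysis.
Set Implicit Arguments. Unset Strict Implicit. Unset Printing Implicit Defensive.
Import Order.TTheory GRing.Theory Num.Theory.

(* Permutations of length n are elements of 'S_n (permutations of 'I_n,
   i.e. of {0,...,n-1}; this is {1,...,n} shifted by one). *)

Definition dsum_fun k l (s : 'S_k) (t : 'S_l) (i : 'I_(k + l)) : 'I_(k + l) :=
  match fintype.split i with
  | inl a => lshift l (s a)
  | inr b => rshift k (t b)
  end.

Lemma dsum_fun_inj k l (s : 'S_k) (t : 'S_l) : injective (dsum_fun s t).
Proof.
move=> i j; rewrite /dsum_fun -[i]splitK -[j]splitK !unsplitK.
case: (fintype.split i) => a; case: (fintype.split j) => b /= /eqP;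
  rewrite /eq_op /= ?eqn_add2l.
- by move=> /eqP /val_inj /perm_inj ->.
- by move=> /eqP E; have := ltn_ord (s a); rewrite E -ltn_subRL subnn.
- by move=> /eqP E; have := ltn_ord (s b); rewrite -E -ltn_subRL subnn.
- by move=> /eqP /val_inj /perm_inj ->.
Qed.

Definition dsum k l (s : 'S_k) (t : 'S_l) : 'S_(k + l) :=
  perm (@dsum_fun_inj k l s t).

Definition indecomposable n (s : 'S_n) : Prop :=
  ~ exists k l (E : k + l = n) (s1 : 'S_k) (s2 : 'S_l),
      0 < k /\ 0 < l /\ s = cast_perm E (dsum s1 s2).

Definition subperm k n (t : 'S_k) (s : 'S_n) : Prop :=
  exists f : 'I_k -> 'I_n,
    (forall i j : 'I_k, i < j -> f i < f j) /\
    (forall i j : 'I_k, (t i < t j) = (s (f i) < s (f j))).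

Inductive sum_closure (S : forall n, {set 'S_n}) : forall n, 'S_n -> Prop :=
  | sc_one n (s : 'S_n) : s \in S n -> sum_closure S s
  | sc_cons k l (s : 'S_k) (t : 'S_l) :
      s \in S k -> sum_closure S t -> sum_closure S (dsum s t).

Definition sum_closure_n (S : forall n, {set 'S_n}) (n : nat) : {set 'S_n} :=
  [set s : 'S_n | `[< sum_closure S s >]].

(* Main.v *)
Require Import Defs.
From HB Require Import structures.
From mathcomp Require Import all_boot all_order all_algebra all_fingroup.
From mathcomp Require Import all_classical all_reals all_analysis.
From mathcomp Require Import ring lra zify.
Set Implicit Arguments. Unset Strict Implicit. Unset Printing Implicit Defensive.

Lemma dsumL k l (s : 'S_k) (t : 'S_l) (i : 'I_k) :
  dsum s t (lshift l i) = lshift l (s i).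
Proof. by rewrite /dsum permE /dsum_fun (unsplitK (inl i)). Qed.

Lemma dsumR k l (s : 'S_k) (t : 'S_l) (i : 'I_l) :
  dsum s t (rshift k i) = rshift k (t i).
Proof. by rewrite /dsum permE /dsum_fun (unsplitK (inr i)). Qed.

Lemma dsum_inj k l (s s' : 'S_k) (t t' : 'S_l) :
  dsum s t = dsum s' t' -> s = s' /\ t = t'.
Proof.
move=> E; split; apply/permP => i.
  by have := dsumL s t i; rewrite E dsumL => /lshift_inj.
by have := dsumR s t i; rewrite E dsumR => /rshift_inj.
Qed.

Lemma dsum_lt k l (s : 'S_k) (t : 'S_l) (i : 'I_(k + l)) :
  ((dsum s t i < k) = (i < k))%N.
Proof.
rewrite -[i]splitK; case: (fintype.split i) => [a|b] /=.
  by rewrite dsumL /= !ltn_ord.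
by rewrite dsumR /= !ltnNge !leq_addr.
Qed.

Definition blk n (x : 'S_n) (j : nat) := [forall i : 'I_n, (i < j)%N ==> (x i < j)%N].

Lemma blk_up n (x : 'S_n) j : blk x j -> forall i : 'I_n, (j <= i)%N -> (j <= x i)%N.
Proof.
move=> /forallP hb i hji; rewrite leqNgt; apply/negP => hxi.
pose A := [set y : 'I_n | (y < j)%N].
have sub : x @: A \subset A.
  apply/fintype.subsetP => y /imsetP [z hz ->]; rewrite inE in hz; rewrite inE; exact: (implyP (hb z)).
have eqA : x @: A = A.
  by apply/eqP; rewrite eqEcard sub (card_imset _ (@perm_inj _ x)) leqnn.
have : x i \in x @: A by rewrite eqA inE.
case/imsetP => z hz /perm_inj ez; rewrite inE in hz.
by move: hji; rewrite ez leqNgt hz.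
Qed.

Lemma blk_decomp k (x : 'S_k) j : (0 < j)%N -> (j < k)%N -> blk x j -> ~ indecomposable x.
Proof.
move=> hj0 hjk hb; apply; have hjk' := ltnW hjk.
have H1 : forall i : 'I_j, (x (widen_ord hjk' i) < j)%N.
  by move=> i; exact: (implyP (forallP hb (widen_ord hjk' i)) (ltn_ord i)).
have inj1 : injective (fun i : 'I_j => Ordinal (H1 i)).
  move=> a b [] /val_inj /perm_inj /(congr1 val) /= ab; exact: val_inj.
have Hi : forall i : 'I_(k - j), (j + i < k)%N.
  by move=> i; rewrite -ltn_subRL.
have H2 : forall i : 'I_(k - j), (x (Ordinal (Hi i)) - j < k - j)%N.
  by move=> i; apply: ltn_sub2r => //; apply: ltn_ord.
have inj2 : injective (fun i : 'I_(k - j) => Ordinal (H2 i)).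
  move=> a b [] ab; apply: val_inj.
  have hu : forall i, (j <= x (Ordinal (Hi i)))%N.
    by move=> i; apply: (blk_up hb); rewrite /= leq_addr.
  move: ab => /(congr1 (addn j)); rewrite !subnKC ?hu // => /val_inj /perm_inj.
  by move/(congr1 val) => /= /eqP; rewrite eqn_add2l => /eqP.
exists j, (k - j), (subnKC hjk'), (perm inj1), (perm inj2).
split=> //; split; first by rewrite subn_gt0.
apply/permP => i; apply: val_inj; rewrite cast_permE /=.
case: (splitP (cast_ord (esym (subnKC hjk')) i)) => [a Ha | b Hb].
  have -> : cast_ord (esym (subnKC hjk')) i = lshift (k - j) a by apply: val_inj.
  rewrite dsumL /= permE /=; congr (val (x _)); exact: val_inj.
have -> : cast_ord (esym (subnKC hjk')) i = rshift j b by apply: val_inj.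
rewrite dsumR /= permE /= subnKC; last by apply: (blk_up hb); rewrite /= leq_addr.
congr (val (x _)); exact: val_inj.
Qed.

Lemma dsum0 l (s : 'S_0) (t : 'S_l) : dsum s t = t :> 'S_l.
Proof.
apply/permP => i; apply: val_inj.
have e := congr1 val (dsumR s t i).
move: e; rewrite /= (_ : rshift 0 i = i) //; exact: val_inj.
Qed.

Lemma dsum_r0 n (s : 'S_n) (t : 'S_0) : s = cast_perm (addn0 n) (dsum s t).
Proof.
apply/permP => i; apply: val_inj; rewrite cast_permE /=.
case: (splitP (cast_ord (esym (addn0 n)) i)) => [a Ha | b Hb]; last by case: b Hb.
have -> : cast_ord (esym (addn0 n)) i = lshift 0 a by apply: val_inj.
by rewrite dsumL /=; congr (val (s _)); apply: val_inj.
Qed.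

Lemma closure_cast (S : forall n, {set 'S_n}) m n (E : m = n) (x : 'S_m) :
  sum_closure S x -> sum_closure S (cast_perm E x).
Proof. by case: n / E; rewrite cast_perm_id. Qed.

Lemma closure_dec (S : forall n, {set 'S_n}) (S0 : forall x : 'S_0, x \in S 0)
  n (x : 'S_n) : sum_closure S x -> (n = 0)%N \/
  exists k l (E : (k + l = n)%N) (s : 'S_k) (t : 'S_l),
    [/\ (0 < k)%N, s \in S k, sum_closure S t & x = cast_perm E (dsum s t)].
Proof.
elim=> [m s hs | k l s t hs ht IH].
  case: m s hs => [|m] s hs; [by left | right].
  exists m.+1, 0, (addn0 m.+1), s, 1%g; split => //; first by apply: sc_one.
  exact: dsum_r0.
case: k s hs => [|k] s hs.
  case: IH => [hl|[k' [l' [E [s' [t' [h1 h2 h3 h4]]]]]]]; [by left; rewrite add0n | right].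
  exists k', l', E, s', t'; split => //; by rewrite dsum0.
right; exists k.+1, l, erefl, s, t; split => //; by rewrite cast_perm_id.
Qed.

Definition fb n (x : 'S_n) : nat := find (fun j => blk x j.+1) (iota 0 n).

Lemma find_iota_eq (p : pred nat) n i :
  (i < n)%N -> p i -> (forall j, (j < i)%N -> ~~ p j) -> find p (iota 0 n) = i.
Proof.
move=> hin hp hj.
case: (ltngtP (find p (iota 0 n)) i) => // h.
- have hs : (find p (iota 0 n) < size (iota 0 n))%N by rewrite size_iota (ltn_trans h).
  have hh : has p (iota 0 n) by rewrite has_find.
  have hp' := nth_find 0 hh.
  rewrite nth_iota ?add0n in hp'; last exact: ltn_trans h hin.
  by move: (hj _ h); rewrite hp'.
- have := before_find 0 h; rewrite nth_iota // add0n hp //.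
Qed.

Lemma blk_cast_dsum k l n (E : (k + l = n)%N) (s : 'S_k) (t : 'S_l) :
  blk (cast_perm E (dsum s t)) k.
Proof.
apply/forallP => i; apply/implyP => hi; rewrite cast_permE /= dsum_lt //.
Qed.

Lemma blk_cast_dsum_inv k l n (E : (k + l = n)%N) (s : 'S_k) (t : 'S_l) j :
  blk (cast_perm E (dsum s t)) j -> blk s j.
Proof.
move=> /forallP hb; apply/forallP => a; apply/implyP => ha.
have := implyP (hb (cast_ord E (lshift l a))) ha.
by rewrite cast_permE cast_ordK dsumL.
Qed.

Lemma fb_cast_dsum k l n (E : (k + l = n)%N) (s : 'S_k) (t : 'S_l) :
  (0 < k)%N -> indecomposable s -> fb (cast_perm E (dsum s t)) = k.-1.
Proof.
move=> hk hs; rewrite /fb; apply: find_iota_eq.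
- have hkn : (k <= n)%N by rewrite -E leq_addr.
  by rewrite prednK.
- by rewrite prednK //; apply: blk_cast_dsum.
- move=> j hj; apply/negP => /blk_cast_dsum_inv hb.
  by apply: (blk_decomp (j := j.+1)) hb hs => //; rewrite -(prednK hk) ltnS.
Qed.

Lemma Sn_mem (S : forall n, {set 'S_n}) n (x : 'S_n) :
  (x \in sum_closure_n S n) = `[< sum_closure S x >].
Proof. by rewrite inE. Qed.

Lemma closure0_card (S : forall n, {set 'S_n}) (S0 : forall x : 'S_0, x \in S 0) :
  #|sum_closure_n S 0| = 1%N.
Proof.
have -> : sum_closure_n S 0 = [set 1%g].
  apply/setP => x; rewrite Sn_mem inE.
  have -> : x = 1%g by apply/permP => i; case: i.
  by rewrite eqxx; apply/asboolP; apply: sc_one.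
by rewrite cards1.
Qed.

Lemma closure_rec (S : forall n, {set 'S_n})
  (H1 : forall n (s : 'S_n), s \in S n -> indecomposable s)
  (S0 : forall x : 'S_0, x \in S 0) n :
  #|sum_closure_n S n.+1| = (\sum_(m < n.+1) #|S m.+1| * #|sum_closure_n S (n - m)|)%N.
Proof.
pose fbo (x : 'S_n.+1) : 'I_n.+1 := inord (fb x).
rewrite -sum1_card (partition_big fbo predT) //=.
apply: eq_bigr => m _; rewrite sum1dep_card.
have Em : (m.+1 + (n - m) = n.+1)%N by rewrite addSn subnKC // -ltnS.
have -> : [set x | (x \in sum_closure_n S n.+1) && (fbo x == m)] =
   [set cast_perm Em (dsum p.1 p.2) | p in finset.setX (S m.+1) (sum_closure_n S (n - m))].
  apply/setP => x; rewrite !inE; apply/andP/imsetP.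
  - case; try rewrite Sn_mem; move=> /asboolP hx hm.
    case: (closure_dec S0 hx) => // -[k [l [E [s [t [hk hs ht ex]]]]]].
    have hfb := fb_cast_dsum E t hk (H1 _ _ hs).
    have hk' : k = m.+1.
      have hkn : (k <= n.+1)%N by rewrite -E leq_addr.
      move: hm; rewrite /fbo ex hfb => /eqP <-; rewrite inordK; lia.
    subst k.
    have hl : l = (n - m)%N by apply/eqP; rewrite -(eqn_add2l m.+1) E Em.
    subst l.
    exists (s, t); first by rewrite inE hs /= ?Sn_mem; apply/asboolP.
    by rewrite ex (eq_irrelevance E Em).
  - case=> [[s t]]; rewrite inE /= => /andP [hs]; try rewrite Sn_mem; move=> /asboolP ht ->.
    split.
      by try rewrite Sn_mem; apply/asboolP; apply: closure_cast; apply: sc_cons.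
    by rewrite /fbo fb_cast_dsum //= ?inord_val //; apply: H1.
rewrite card_in_imset ?cardsX //.
move=> [s t] [s' t'] _ _ /= /cast_perm_inj /dsum_inj [-> ->] //.
Qed.

Lemma S0_all (S : forall n, {set 'S_n})
  (H2 : forall n k (s : 'S_n) (t : 'S_k),
      s \in S n -> subperm t s -> indecomposable t -> t \in S k)
  (hS1 : (0 < #|S 1|)%N) : forall x : 'S_0, x \in S 0.
Proof.
move=> x; case/card_gt0P: hS1 => s hs.
apply: (H2 1%N 0%N s x hs).
  by exists (fun i => ord0); split => i; case: i.
by move=> [k [l [E [_ [_ [hk _]]]]]]; move: E; case: k hk.
Qed.

Import Order.TTheory GRing.Theory Num.Theory numFieldNormedType.Exports.
Local Open Scope classical_set_scope.
Local Open Scope ring_scope.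

Lemma lim_le_const (R : realType) (f : nat -> R) l M N0 :
  f @ \oo --> l -> (forall n, (N0 <= n)%N -> f n <= M) -> l <= M.
Proof.
move=> hf hb; rewrite leNgt; apply/negP => hlM.
have [N _ hN] := cvgr_gt _ hf _ hlM.
have := hN (maxn N N0) (leq_maxl _ _); rewrite /= ltNge.
by rewrite hb // leq_maxr.
Qed.

Lemma lim_ge_const (R : realType) (f : nat -> R) l M N0 :
  f @ \oo --> l -> (forall n, (N0 <= n)%N -> M <= f n) -> M <= l.
Proof.
move=> hf hb; rewrite leNgt; apply/negP => hlM.
have [N _ hN] := cvgr_lt _ hf _ hlM.
have := hN (maxn N N0) (leq_maxl _ _); rewrite /= ltNge.
by rewrite hb // leq_maxr.
Qed.

Definition PS (R : realType) (s : nat -> nat) (x : R) (N : nat) : R :=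
  \sum_(m < N) (s m.+1)%:R * x ^+ m.+1.

Lemma PS_S (R : realType) s (x : R) N :
  PS s x N.+1 = PS s x N + (s N.+1)%:R * x ^+ N.+1.
Proof. by rewrite /PS big_ord_recr. Qed.

Lemma PS0 (R : realType) s (x : R) : PS s x 0 = 0.
Proof. by rewrite /PS big_ord0. Qed.

Lemma PS_ge0 (R : realType) s (x : R) N : 0 <= x -> 0 <= PS s x N.
Proof. by move=> hx; apply: sumr_ge0 => m _; rewrite mulr_ge0 ?exprn_ge0. Qed.

Lemma PS_nd (R : realType) s (x : R) : 0 <= x -> nondecreasing_seq (PS s x).
Proof.
move=> hx; apply/nondecreasing_seqP => n; rewrite PS_S lerDl.
by rewrite mulr_ge0 ?exprn_ge0.
Qed.

Lemma geo_sum (R : realType) (x : R) N :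
  (1 - x) * \sum_(m < N) x ^+ m.+1 = x - x ^+ N.+1.
Proof.
elim: N => [|N IH]; first by rewrite big_ord0 mulr0 expr1 subrr.
rewrite big_ord_recr /= mulrDr IH (exprS x N.+1); set y := x ^+ N.+1; ring.
Qed.

Lemma geo_le (R : realType) (x : R) N : 0 <= x < 1 ->
  \sum_(m < N) x ^+ m.+1 <= x / (1 - x).
Proof.
case/andP => hx0 hx1.
have h1 : 0 < 1 - x by rewrite subr_gt0.
rewrite ler_pdivlMr // mulrC geo_sum gerBl exprn_ge0 //.
Qed.

Lemma PS_ub (R : realType) s c (x : R) N :
  (forall n, (0 < n)%N -> (s n <= c)%N) -> 0 <= x < 1 ->
  PS s x N <= c%:R * (x / (1 - x)).
Proof.
move=> hs hx; apply: le_trans (_ : c%:R * \sum_(m < N) x ^+ m.+1 <= _); last first.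
  by rewrite ler_wpM2l ?ler0n ?geo_le.
rewrite mulr_sumr; apply: ler_sum => m _; apply: ler_wpM2r.
  by case/andP: hx => hx _; rewrite exprn_ge0.
by rewrite ler_nat hs.
Qed.

Lemma PS_cvg (R : realType) s c (x : R) :
  (forall n, (0 < n)%N -> (s n <= c)%N) -> 0 <= x < 1 -> cvgn (PS s x).
Proof.
move=> hs hx; apply: nondecreasing_is_cvgn; first by apply: PS_nd; case/andP: hx.
exists (c%:R * (x / (1 - x))) => _ [N _ <-]; exact: PS_ub.
Qed.

Lemma PS_diff (R : realType) s (y z : R) N :
  (1 <= s 1)%N -> 0 <= y <= z -> (0 < N)%N -> z - y <= PS s z N - PS s y N.
Proof.
move=> hs1 /andP [hy hyz]; case: N => // N _.
elim: N => [|N IH].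
  rewrite !PS_S !PS0 !add0r !expr1 -mulrBr.
  rewrite -[X in X <= _]mul1r ler_wpM2r ?subr_ge0 //.
  by rewrite (ler_nat R 1).
rewrite PS_S [PS s y N.+2]PS_S.
have h : 0 <= (s N.+2)%:R * z ^+ N.+2 - (s N.+2)%:R * y ^+ N.+2.
  rewrite -mulrBr mulr_ge0 ?ler0n // subr_ge0 lerXn2r // nnegrE //.
  exact: le_trans hyz.
apply: (le_trans IH); lra.
Qed.

Lemma pow_diff (R : realType) (x y r : R) m :
  0 <= x <= r -> 0 <= y <= r ->
  `|x ^+ m.+1 - y ^+ m.+1| <= (m.+1)%:R * r ^+ m * `|x - y|.
Proof.
move=> /andP [hx hxr] /andP [hy hyr].
elim: m => [|m IH]; first by rewrite !expr1 expr0 mulr1 mul1r.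
have -> : x ^+ m.+2 - y ^+ m.+2 = x * (x ^+ m.+1 - y ^+ m.+1) + (x - y) * y ^+ m.+1.
  by rewrite (exprS x m.+1) (exprS y m.+1); ring.
apply: (le_trans (ler_normD _ _)); rewrite !normrM.
have hr : 0 <= r by apply: le_trans hxr.
have h1 : `|x| * `|x ^+ m.+1 - y ^+ m.+1| <= r * ((m.+1)%:R * r ^+ m * `|x - y|).
  by apply: ler_pM => //; rewrite ger0_norm.
have h2 : `|x - y| * `|y ^+ m.+1| <= `|x - y| * r ^+ m.+1.
  by apply: ler_wpM2l => //; rewrite ger0_norm ?exprn_ge0 // lerXn2r // nnegrE.
apply: (le_trans (lerD h1 h2)).
rewrite (exprS r m) -[(m.+2)%:R]natr1 -[(m.+1)%:R]natr1; set u := r ^+ m; set d := `|x - y|.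
by rewrite le_eqVlt; apply/orP; left; apply/eqP; ring.
Qed.

Lemma wsum_eq (R : realType) (r : R) N :
  (1 - r) ^+ 2 * \sum_(m < N) (m.+1)%:R * r ^+ m = 1 - (N.+1)%:R * r ^+ N + N%:R * r ^+ N.+1.
Proof.
elim: N => [|N IH]; first by rewrite big_ord0 mulr0 expr0 mul1r mul0r addr0 subrr.
rewrite big_ord_recr /= mulrDr IH (exprS r N.+1) (exprS r N).
rewrite -[(N.+2)%:R]natr1 -[(N.+1)%:R]natr1; set u := r ^+ N; ring.
Qed.

Lemma wsum_le (R : realType) (r : R) N : 0 <= r < 1 ->
  \sum_(m < N) (m.+1)%:R * r ^+ m <= ((1 - r) ^+ 2)^-1.
Proof.
case/andP => h0 h1.
have hp : 0 < (1 - r) ^+ 2 by rewrite exprn_gt0 // subr_gt0.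
rewrite -(ler_pM2l hp) mulrV ?unitfE ?gt_eqF // wsum_eq.
have hu : 0 <= r ^+ N by rewrite exprn_ge0.
have : N%:R * r ^+ N.+1 <= (N.+1)%:R * r ^+ N.
  rewrite exprS -natr1 mulrA (mulrC _ r) -mulrA.
  set v := N%:R * r ^+ N.
  have hv : 0 <= v by rewrite mulr_ge0 ?ler0n.
  have hrv : r * v <= v by rewrite ler_piMl // ltW.
  rewrite mulrDl mul1r -/v; lra.
lra.
Qed.

Lemma PS_lip (R : realType) s c (x y : R) N :
  (forall n, (0 < n)%N -> (s n <= c)%N) -> 0 <= x <= 3/4 -> 0 <= y <= 3/4 ->
  `|PS s x N - PS s y N| <= c%:R * 16 * `|x - y|.
Proof.
move=> hs hx hy; rewrite /PS -sumrB.
apply: (le_trans (ler_norm_sum _ _ _)).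
apply: (le_trans (_ : _ <= \sum_(m < N) c%:R * `|x - y| * ((m.+1)%:R * (3/4) ^+ m))).
  apply: ler_sum => m _; rewrite -mulrBr normrM ger0_norm ?ler0n //.
  rewrite -[_ * _ * (_ * _)]mulrA; apply: ler_pM; rewrite ?ler0n ?normr_ge0 ?ler_nat ?hs //.
  by rewrite mulrC; apply: pow_diff.
rewrite -mulr_sumr (_ : c%:R * 16 * `|x - y| = c%:R * `|x - y| * 16); last by ring.
apply: ler_wpM2l.
  by rewrite mulr_ge0 ?ler0n.
apply: (le_trans (wsum_le _ _)); first lra.
rewrite (_ : (1 - 3/4 : R) ^+ 2 = 16^-1); last by rewrite expr2; field.
by rewrite invrK.
Qed.

Definition G (R : realType) s (x : R) := limn (PS s x).

Lemma PS_to_G (R : realType) s c (x : R) :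
  (forall n, (0 < n)%N -> (s n <= c)%N) -> 0 <= x < 1 -> PS s x @ \oo --> G s x.
Proof. move=> hs hx; exact: (PS_cvg hs hx). Qed.

Lemma G_lip (R : realType) s c (x y : R) :
  (forall n, (0 < n)%N -> (s n <= c)%N) -> 0 <= x <= 3/4 -> 0 <= y <= 3/4 ->
  `|G s x - G s y| <= c%:R * 16 * `|x - y|.
Proof.
move=> hs hx hy.
have hx1 : 0 <= x < 1 by move: hx => /andP [] *; apply/andP; split => //; lra.
have hy1 : 0 <= y < 1 by move: hy => /andP [] *; apply/andP; split => //; lra.
have hd : (fun n => PS s x n - PS s y n) @ \oo --> G s x - G s y.
  exact: cvgB (PS_to_G hs hx1) (PS_to_G hs hy1).
rewrite ler_norml; apply/andP; split.
  apply: (lim_ge_const (N0 := 0%N) hd) => n _ /=.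
  by have := PS_lip n hs hx hy; rewrite ler_norml => /andP [].
apply: (lim_le_const (N0 := 0%N) hd) => n _ /=.
by have := PS_lip n hs hx hy; rewrite ler_norml => /andP [].
Qed.

Definition clamp (R : realType) (x : R) : R := Num.min (Num.max x 0) (3/4).

Lemma clamp_cases (R : realType) (x : R) :
  (x <= 0 /\ clamp x = 0) \/ (0 <= x <= 3/4 /\ clamp x = x) \/ (3/4 <= x /\ clamp x = 3/4).
Proof.
rewrite /clamp; have [h|h] := leP x 0.
  left; split => //; rewrite min_l //; lra.
have [h'|h'] := leP x (3/4).
  by right; left; split => //; apply/andP; split => //; exact: ltW.
by right; right; split => //; exact: ltW.
Qed.

Lemma clamp_in (R : realType) (x : R) : 0 <= clamp x <= 3/4.
Proof. by case: (clamp_cases x) => [[_ ->]|[[/andP[h1 h2] ->]|[_ ->]]]; apply/andP; split => //; lra. Qed.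

Lemma clamp_lip (R : realType) (x y : R) : `|clamp x - clamp y| <= `|x - y|.
Proof.
have h1 : x - y <= `|x - y| by apply: ler_norm.
have h2 : y - x <= `|x - y| by rewrite distrC; apply: ler_norm.
rewrite ler_norml.
case: (clamp_cases x) => [[a ->]|[[/andP[a a'] ->]|[a ->]]];
case: (clamp_cases y) => [[b ->]|[[/andP[b b'] ->]|[b ->]]]; apply/andP; split; lra.
Qed.

Lemma lip_cont (R : realType) (f : R -> R) (K : R) :
  0 <= K -> (forall x y, `|f x - f y| <= K * `|x - y|) -> continuous f.
Proof.
move=> hK hf x; apply/cvgrPdist_lt => e he; apply/nbhs_normP.
have hK1 : 0 < K + 1 by lra.
exists (e / (K + 1)); first by rewrite /= divr_gt0.
move=> t /= ht.
apply: (le_lt_trans (hf x t)).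
apply: (le_lt_trans (_ : _ <= K * (e / (K + 1)))).
  by apply: ler_wpM2l => //; apply: ltW.
rewrite mulrA ltr_pdivrMr // mulrDr mulr1; lra.
Qed.

Lemma clamp_id (R : realType) (x : R) : 0 <= x <= 3/4 -> clamp x = x.
Proof.
move=> /andP [h1 h2].
case: (clamp_cases x) => [[a ->]|[[_ ->]|[a ->]]] //; lra.
Qed.

Lemma root_exists (R : realType) s c :
  (forall n, (0 < n)%N -> (1 <= s n <= c)%N) ->
  exists x0 : R, [/\ 0 < x0, x0 <= 3/4 & PS s x0 @ \oo --> (1 : R)].
Proof.
move=> hs.
have hs' : forall n, (0 < n)%N -> (s n <= c)%N by move=> n /hs /andP [].
have hs1 : (1 <= s 1)%N by case/andP: (hs 1%N erefl).
have hc : (1 <= c)%N by case/andP: (hs 1%N erefl) => a b; exact: leq_trans a b.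
have hcR : 1 <= c%:R :> R by rewrite (ler_nat R 1).
pose f := fun x : R => G s (clamp x).
have fc : continuous f.
  apply: (@lip_cont _ f (c%:R * 16)); first by rewrite mulr_ge0 ?ler0n.
  move=> x y; apply: (le_trans (G_lip hs' (clamp_in x) (clamp_in y))).
  by apply: ler_wpM2l; [rewrite mulr_ge0 ?ler0n | apply: clamp_lip].
pose lo : R := (c%:R + 1)^-1.
have hlo0 : 0 < lo by rewrite invr_gt0; lra.
have hlo1 : lo <= 1/2.
  rewrite /lo -div1r ler_pdivrMr; last lra.
  rewrite mulrDr mulr1; lra.
have flo : f lo <= 1.
  rewrite /f clamp_id; last by apply/andP; split; lra.
  have hx : 0 <= lo < 1 by apply/andP; split; lra.
  apply: (lim_le_const (N0 := 0%N) (PS_to_G hs' hx)) => n _.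
  apply: (le_trans (PS_ub n hs' hx)).
  rewrite le_eqVlt; apply/orP; left; apply/eqP; rewrite /lo; field.
  by apply/andP; split; lra.
have fhi : 1 <= f (3/4).
  rewrite /f clamp_id; last by apply/andP; split; lra.
  have hx : 0 <= (3/4 : R) < 1 by apply/andP; split; lra.
  apply: (le_trans _ (nondecreasing_cvgn_le (PS_nd s _) (PS_cvg hs' hx) 2)); last lra.
  rewrite !PS_S PS0 add0r.
  have h1 : 1 <= (s 1)%:R :> R by rewrite (ler_nat R 1).
  have h2 : 1 <= (s 2)%:R :> R by rewrite (ler_nat R 1); case/andP: (hs 2%N erefl).
  rewrite !expr1 expr2.
  have : 3/4 <= (s 1)%:R * (3/4 : R) by rewrite -[X in X <= _]mul1r ler_wpM2r //; lra.
  have : 3/4 * (3/4) <= (s 2)%:R * (3/4 * (3/4) : R).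
    by rewrite -[X in X <= _]mul1r ler_wpM2r //; lra.
  lra.
have hab : lo <= 3/4 by lra.
have fcw : {within `[lo, 3/4], continuous f} by apply: continuous_subspaceT.
have hv : Num.min (f lo) (f (3/4)) <= 1 <= Num.max (f lo) (f (3/4)).
  apply/andP; split.
    by apply: le_trans flo; rewrite ge_min lexx.
  by apply: le_trans fhi _; rewrite le_max lexx orbT.
have [x0 hx0 fx0] := @IVT R f lo (3/4) 1 hab fcw hv.
move: hx0; rewrite in_itv /= => /andP [a b].
exists x0; split => //; first lra.
have hx : 0 <= x0 < 1 by apply/andP; split; lra.
move: fx0; rewrite /f clamp_id; last by apply/andP; split; lra.
by move=> <-; exact: PS_to_G hs' hx.
Qed.

Lemma pow_inv_cvg1 (R : realType) (d : R) : 0 < d ->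
  (fun n : nat => d `^ (n%:R^-1)) @ \oo --> (1 : R).
Proof.
move=> hd; rewrite -cvg_shiftS /=.
have h1 : (fun n => harmonic n * ln d) @ \oo --> 0 * ln d.
  exact: cvgMl cvg_harmonic.
have h2 := cvg_comp _ _ h1 (@continuous_expR R _).
rewrite mul0r expR0 in h2.
apply: cvg_trans h2; apply: near_eq_cvg; apply: nearW => n /=.
by rewrite /powR gt_eqF.
Qed.

Lemma final_lim (R : realType) (a : nat -> nat) (g d : R) (b : nat -> R) :
  0 < g -> 0 < d -> (forall n, d <= b n <= 1) -> (forall n, (a n)%:R = b n * g ^+ n) ->
  (fun n => (a n)%:R `^ (n%:R^-1)) @ \oo --> g.
Proof.
move=> hg hd hb ha.
have hf : (fun n : nat => d `^ (n%:R^-1) * g) @ \oo --> g.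
  by rewrite -[X in _ --> X]mul1r; apply: cvgMl; apply: pow_inv_cvg1.
apply: (squeeze_cvgr _ hf (cvg_cst g)).
exists 1%N => // n /= hn.
have hb0 : 0 <= b n by case/andP: (hb n) => h _; exact: le_trans (ltW hd) h.
have hr : 0 <= n%:R^-1 :> R by rewrite invr_ge0 ler0n.
rewrite ha powRM ?exprn_ge0 ?(ltW hg) //.
rewrite -powR_mulrn ?(ltW hg) // -powRrM mulfV ?pnatr_eq0 -?lt0n // powRr1 ?(ltW hg) //.
case/andP: (hb n) => h1 h2; apply/andP; split.
  apply: ler_wpM2r; first exact: ltW.
  by apply: ge0_ler_powR => //; rewrite nnegrE ltW.
rewrite -[X in _ <= X]mul1r; apply: ler_wpM2r; first exact: ltW.
have := @ge0_ler_powR R _ hr (b n) 1; rewrite !nnegrE powR1 => /(_ hb0 ler01 h2) //.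
Qed.

Lemma bseq_bounds (R : realType) s c (a : nat -> nat) (x0 : R) :
  (forall n, (0 < n)%N -> (1 <= s n <= c)%N) -> 0 < x0 -> x0 <= 3/4 ->
  PS s x0 @ \oo --> (1 : R) ->
  a 0 = 1%N -> (forall n, a n.+1 = \sum_(m < n.+1) s m.+1 * a (n - m))%N ->
  exists d : R, 0 < d /\ forall n, d <= (a n)%:R * x0 ^+ n <= 1.
Proof.
move=> hs hx0 hx34 hP ha0 harec.
have hs' : forall n, (0 < n)%N -> (s n <= c)%N by move=> n /hs /andP [].
have hs1 : (1 <= s 1)%N by case/andP: (hs 1%N erefl).
have hx01 : 0 <= x0 < 1 by apply/andP; split; lra.
pose w m := (s m.+1)%:R * x0 ^+ m.+1.
have hw0 : forall m, 0 <= w m by move=> m; rewrite mulr_ge0 ?ler0n ?exprn_ge0 // ltW.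
pose P := PS s x0.
pose b n := (a n)%:R * x0 ^+ n.
have hP1 : forall N, P N <= 1.
  move=> N; apply: (lim_ge_const (N0 := N) hP) => n hn.
  exact: (PS_nd s (ltW hx0)).
have ha1 : forall n, (1 <= a n)%N.
  elim=> [|n IH]; first by rewrite ha0.
  rewrite harec big_ord_recl /= subn0; apply: leq_trans (leq_addr _ _).
  by apply: leq_trans IH _; apply: leq_pmull.
have brec : forall n, b n.+1 = \sum_(m < n.+1) w m * b (n - m)%N.
  move=> n; rewrite /b harec natr_sum mulr_suml; apply: eq_bigr => m _.
  have hm : (m.+1 + (n - m) = n.+1)%N by rewrite addSn subnKC // -ltnS.
  have -> : x0 ^+ n.+1 = x0 ^+ m.+1 * x0 ^+ (n - m) by rewrite -exprD hm.
  rewrite /w /b natrM; ring.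
have hb1 : forall n, b n <= 1.
  elim/ltn_ind => -[|n] IH; first by rewrite /b ha0 expr0 mulr1.
  rewrite brec; apply: le_trans (hP1 n.+1); rewrite /P /PS.
  apply: ler_sum => m _; rewrite -/(w m) ler_piMr //.
  by apply: IH; rewrite ltnS leq_subr.
pose C0 := c%:R * (x0 / (1 - x0)).
have hgeo : forall k, \sum_(j < k) x0 ^+ j.+1 <= x0 / (1 - x0) by move=> k; exact: geo_le.
have hgeo0 : forall k, 0 <= \sum_(j < k) x0 ^+ j.+1.
  by move=> k; apply: sumr_ge0 => j _; rewrite exprn_ge0 // ltW.
have hx0n : forall n, 0 <= x0 ^+ n by move=> n; rewrite exprn_ge0 // ltW.
have hstep : forall N k, P (N + k)%N <= P N + c%:R * x0 ^+ N * \sum_(j < k) x0 ^+ j.+1.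
  move=> N; elim=> [|k IH]; first by rewrite addn0 big_ord0 mulr0 addr0.
  rewrite addnS {1}/P PS_S -/P big_ord_recr /= mulrDr.
  have : (s (N + k).+1)%:R * x0 ^+ (N + k).+1 <= c%:R * x0 ^+ N * x0 ^+ k.+1.
    rewrite -mulrA -exprD addnS; apply: ler_wpM2r => //.
    by rewrite ler_nat hs'.
  lra.
have hT : forall N, 1 - P N <= C0 * x0 ^+ N.
  move=> N; suff : 1 <= P N + C0 * x0 ^+ N by lra.
  apply: (lim_le_const (N0 := N) hP) => n hn.
  rewrite -(subnKC hn); apply: (le_trans (hstep N (n - N)%N)).
  rewrite lerD2l /C0 [c%:R * _ * x0 ^+ N]mulrAC; apply: ler_wpM2l; last exact: hgeo.
  by rewrite mulr_ge0 ?ler0n.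
pose C1 := C0 * (x0 / (1 - x0)).
have hC0 : 0 <= C0 by rewrite mulr_ge0 ?ler0n // divr_ge0 ?(ltW hx0) //; lra.
have hC1 : 0 <= C1 by rewrite mulr_ge0 // divr_ge0 ?(ltW hx0) //; lra.
have hz : 0 < (2 * C1 + 1)^-1 by rewrite invr_gt0; lra.
have hexp : (fun n => x0 ^+ n) @ \oo --> (0 : R).
  by apply: cvg_expr; rewrite ger0_norm ?(ltW hx0) //; lra.
have [K _ hK] := cvgr_lt _ hexp _ hz.
have hKz := hK K (leqnn K); rewrite /= in hKz.
have hC1K : C1 * x0 ^+ K <= 1/2.
  have : x0 ^+ K * (2 * C1 + 1) < 1 by rewrite -ltr_pdivlMr //; lra.
  have := hx0n K; lra.
pose beta := x0 ^+ K.
have hbeta : 0 < beta by rewrite exprn_gt0.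
have hbK : forall j, (j <= K)%N -> beta <= b j.
  move=> j hj; rewrite /b /beta.
  apply: (le_trans (_ : _ <= x0 ^+ j)); first by apply: ler_wiXn2l => //; lra.
  rewrite -[X in X <= _]mul1r; apply: ler_wpM2r => //.
  by rewrite (ler_nat R 1) ha1.
pose S i := \sum_(j < i) (1 - P (K + j).+1).
have hS0 : forall i, 0 <= S i.
  by move=> i; apply: sumr_ge0 => j _; have := hP1 (K + j).+1; lra.
have hSb : forall i, S i <= 1/2.
  move=> i; apply: le_trans hC1K.
  apply: (le_trans (_ : _ <= \sum_(j < i) C0 * x0 ^+ K * x0 ^+ j.+1)).
    apply: ler_sum => j _; apply: (le_trans (hT _)).
    by rewrite -mulrA -exprD addnS.
  rewrite -mulr_sumr /C1 [C0 * _ * x0 ^+ K]mulrAC; apply: ler_wpM2l; last exact: hgeo.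
  by rewrite mulr_ge0.
have inv : forall i j, (j <= K + i)%N -> beta * (1 - S i) <= b j.
  elim=> [|i IH] j hj.
    rewrite /S big_ord0 subr0 mulr1; apply: hbK; by rewrite addn0 in hj.
  have hSi : S i.+1 = S i + (1 - P (K + i).+1) by rewrite /S big_ord_recr.
  rewrite hSi; set T := 1 - P (K + i).+1.
  have hT0 : 0 <= T by have := hP1 (K + i).+1; rewrite /T; lra.
  have hbT : 0 <= beta * T by rewrite mulr_ge0 // ltW.
  have hbST : 0 <= beta * S i * T by rewrite !mulr_ge0 // ltW.
  case: (leqP j (K + i)) => hji.
    have := IH j hji; lra.
  have -> : j = (K + i).+1 by apply/eqP; rewrite eqn_leq hji -addnS hj.
  rewrite brec.
  apply: (le_trans (_ : _ <= \sum_(m < (K + i).+1) w m * (beta * (1 - S i)))); last first.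
    apply: ler_sum => m _; apply: ler_wpM2l => //; apply: IH; exact: leq_subr.
  rewrite -mulr_suml -/(PS s x0 (K + i).+1) -/P.
  have -> : P (K + i).+1 = 1 - T by rewrite /T; ring.
  rewrite -subr_ge0 (_ : (1 - T) * (beta * (1 - S i)) - beta * (1 - (S i + T)) = beta * S i * T) //.
  by rewrite /T; ring.
exists (beta / 2); split; first by rewrite divr_gt0.
move=> n; rewrite -/(b n); apply/andP; split; last exact: hb1.
case: (leqP n K) => hn.
  by apply: le_trans (hbK n hn); lra.
have hh : (n <= K + (n - K))%N by rewrite subnKC // ltnW.
have := inv (n - K)%N n hh.
have := hSb (n - K)%N; have := hS0 (n - K)%N.
have : 0 <= beta * (1/2 - S (n - K)%N).
  by rewrite mulr_ge0 ?subr_ge0 ?(ltW hbeta) // hSb.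
lra.
Qed.

Lemma root_unique (R : realType) s c (x0 y : R) :
  (forall n, (0 < n)%N -> (1 <= s n <= c)%N) -> 0 <= x0 -> 0 <= y ->
  PS s x0 @ \oo --> (1 : R) -> PS s y @ \oo --> (1 : R) -> y = x0.
Proof.
move=> hs hx hy hPx hPy.
have hs1 : (1 <= s 1)%N by case/andP: (hs 1%N erefl).
have key : forall u v : R, 0 <= u -> u <= v -> PS s u @ \oo --> (1 : R) ->
    PS s v @ \oo --> (1 : R) -> v <= u.
  move=> u v hu huv hPu hPv.
  have hd : (fun n => PS s v n - PS s u n) @ \oo --> (1 - 1 : R) by apply: cvgB.
  have := lim_ge_const (N0 := 1%N) hd (fun n hn => PS_diff hs1 (introT andP (conj hu huv)) hn).
  lra.
case: (leP y x0) => h.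
  by apply/eqP; rewrite eq_le h (key y x0).
by apply/eqP; rewrite eq_le (key x0 y) // ltW.
Qed.

Lemma series_PS (R : realType) s (g : R) :
  series (fun n => (s n.+1)%:R * g ^- n.+1) = PS s g^-1.
Proof.
apply/funext => N; rewrite seriesEord /PS /=; apply: eq_bigr => m _.
by rewrite exprVn.
Qed.

Unset Implicit Arguments. Set Strict Implicit. Set Printing Implicit Defensive.

Theorem lemma3p1 (R : realType) (S : forall n, {set 'S_n}) :
  (forall n (s : 'S_n), s \in S n -> indecomposable s) ->
  (forall n k (s : 'S_n) (t : 'S_k),
      s \in S n -> subperm t s -> indecomposable t -> t \in S k) ->
  (exists c : nat, forall n, (0 < n)%N -> (1 <= #|S n| <= c)%N) ->
  exists gamma : R,
    [/\ 1 < gamma,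
        series (fun n => #|S n.+1|%:R * gamma ^- n.+1) @ \oo --> (1 : R),
        (forall g : R, 1 < g ->
           series (fun n => #|S n.+1|%:R * g ^- n.+1) @ \oo --> (1 : R) -> g = gamma)
      & (fun n => (#|sum_closure_n S n|%:R : R) `^ (n%:R^-1)) @ \oo --> gamma].
Proof.
move=> H1 H2 [c hc].
pose s := fun n => #|S n|.
have hS1 : (0 < #|S 1|)%N by case/andP: (hc 1%N erefl).
have S0 := S0_all H2 hS1.
have ha0 := closure0_card S0.
have harec := closure_rec H1 S0.
have hs : forall n, (0 < n)%N -> (1 <= s n <= c)%N by [].
have [x0 [hx0 hx34 hP]] := root_exists R hs.
exists x0^-1; split.
- by rewrite invf_gt1 //; lra.
- by rewrite (series_PS s x0^-1) invrK.
- move=> g hg; rewrite (series_PS s g) => hPg.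
  have hg0 : 0 < g by lra.
  have hgi : 0 <= g^-1 by rewrite invr_ge0 ltW.
  have e := root_unique hs (ltW hx0) hgi hP hPg.
  by rewrite -e invrK.
- pose a := fun n : nat => #|sum_closure_n S n|.
  have [d [hd hb]] := @bseq_bounds R s c a x0 hs hx0 hx34 hP ha0 harec.
  apply: (final_lim (b := fun n => (#|sum_closure_n S n|)%:R * x0 ^+ n)).
  + by rewrite invr_gt0.
  + exact: hd.
  + exact: hb.
  + move=> n; rewrite exprVn mulfK //.
    by rewrite expf_neq0 // gt_eqF.
Qed.
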